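(* Let $n,m,k$ be integers with $n\geq m\geq 1$, $k\geq 3$ and $n\leq 6m+6$. Then $$ gr_{k}(K_{3} : S(n, m))\leq \begin{cases} 2n+m(k+3)+8 & \text{ if $n$ is even,}\\ 2n+m(k+3)+9 & \text{ if $n$ is odd.} \end{cases} $$
   Context: For integers $n\geq m\geq 0$, the double star $S(n,m)$ is the graph obtained from the disjoint union of the stars $K_{1,n}$ and $K_{1,m}$ by adding an edge between their centers. A $k$-coloring of a graph is an assignment of one of $k$ colors to each edge. A subgraph is rainbow if all its edges have distinct colors and monochromatic if all its edges have the same color. For graphs $G,H$ and a positive integer $k$, the Gallai–Ramsey number $gr_k(G:H)$ is the minimum integer $N$ such that every $k$-coloring of the edges of the complete graph $K_N$ contains either a rainbow copy of $G$ or a monochromatic copy of $H$. *)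

(* Defs.v *)
From mathcomp Require Import all_boot.
Set Implicit Arguments. Unset Strict Implicit. Unset Printing Implicit Defensive.

(* A k-coloring of the edges of K_N: a symmetric map on pairs of vertices
   'I_N into colors 'I_k (only values on distinct pairs matter). *)
Definition symmetric_coloring (N k : nat) (c : 'I_N -> 'I_N -> 'I_k) : Prop :=
  forall x y, c x y = c y x.

Definition has_rainbow_K3 (N k : nat) (c : 'I_N -> 'I_N -> 'I_k) : Prop :=
  exists x y z : 'I_N,
    [/\ x != y, y != z & x != z] /\
    [/\ c x y != c y z, c y z != c x z & c x y != c x z].

Definition has_mono_double_star (n m N k : nat) (c : 'I_N -> 'I_N -> 'I_k) : Prop :=
  exists (col : 'I_k) (u v : 'I_N) (A B : {set 'I_N}),
    [/\ u != v, #|A| = n, #|B| = m & [disjoint A & B]] /\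
    [/\ u \notin A :|: B, v \notin A :|: B, c u v = col,
        (forall a, a \in A -> c u a = col) &
        (forall b, b \in B -> c v b = col)].

Definition gr_property (n m k N : nat) : Prop :=
  forall c : 'I_N -> 'I_N -> 'I_k, symmetric_coloring c ->
    has_rainbow_K3 c \/ has_mono_double_star n m c.

(* gr_k(K_3 : S(n,m)) <= B  iff  the least N with gr_property is <= B,
   i.e. some N <= B has the property. *)
Definition gr_K3_double_star_le (n m k B : nat) : Prop :=
  exists N, N <= B /\ gr_property n m k N.

(* Main.v *)
Require Import Defs.
From mathcomp Require Import all_boot.
From mathcomp Require Import zify.
From Stdlib Require Import Classical.
Set Implicit Arguments. Unset Strict Implicit. Unset Printing Implicit Defensive.

Lemma subset_of_card (T : finType) (A : {set T}) j :
  j <= #|A| -> exists B : {set T}, B \subset A /\ #|B| = j.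
Proof.
elim: j A => [|j IH] A h.
  by exists set0; rewrite sub0set cards0.
have /card_gt0P [x xA] : 0 < #|A| by lia.
have h' : j <= #|A :\ x| by move: (cardsD1 x A); rewrite xA add1n; lia.
have [B [sB cB]] := IH _ h'.
have xB : x \notin B by apply/negP => /(subsetP sB); rewrite !inE eqxx.
exists (x |: B); split.
  apply/subsetP => y; rewrite !inE => /orP [/eqP -> //|/(subsetP sB)].
  by rewrite !inE => /andP [].
by rewrite cardsU1 xB cB.
Qed.

Section Main.
Variables (n m k N : nat) (c : 'I_N -> 'I_N -> 'I_k).
Hypothesis csym : forall x y, c x y = c y x.
Hypothesis nrb : ~ has_rainbow_K3 c.
Hypothesis nds : ~ has_mono_double_star n m c.

Local Notation V := 'I_N.

Lemma norb (x y z : V) : x != y -> y != z -> x != z ->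
  c x y = c y z \/ c y z = c x z \/ c x y = c x z.
Proof.
move=> xy yz xz.
case: (eqVneq (c x y) (c y z)) => [->|h1]; first by left.
case: (eqVneq (c y z) (c x z)) => [->|h2]; first by right; left.
case: (eqVneq (c x y) (c x z)) => [->|h3]; first by right; right.
by exfalso; apply: nrb; exists x, y, z; split; split.
Qed.

Lemma gds (u v : V) col (A B : {set V}) :
  u != v -> c u v = col -> n <= #|A| -> m <= #|B| -> [disjoint A & B] ->
  u \notin A -> u \notin B -> v \notin A -> v \notin B ->
  (forall a, a \in A -> c u a = col) -> (forall b, b \in B -> c v b = col) ->
  False.
Proof.
move=> uv cuv nA mB dAB uA uB vA vB hA hB.
have [A' [sA cA]] := subset_of_card nA.
have [B' [sB cB]] := subset_of_card mB.
apply: nds; exists col, u, v, A', B'; split; split => //.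
- exact: disjointW sA sB dAB.
- rewrite inE negb_or; apply/andP; split; apply/negP => h.
    by move/negP: uA; apply; apply: (subsetP sA).
  by move/negP: uB; apply; apply: (subsetP sB).
- rewrite inE negb_or; apply/andP; split; apply/negP => h.
    by move/negP: vA; apply; apply: (subsetP sA).
  by move/negP: vB; apply; apply: (subsetP sB).
- by move=> a /(subsetP sA)/hA.
- by move=> b /(subsetP sB)/hB.
Qed.

Lemma joinD (P Q : {set V}) col :
  [disjoint P & Q] -> (forall p q, p \in P -> q \in Q -> c p q = col) ->
  m < #|P| -> n < #|Q| -> False.
Proof.
move=> dPQ h mP nQ.
have /card_gt0P [u uP] : 0 < #|P| by lia.
have /card_gt0P [v vQ] : 0 < #|Q| by lia.
have uv : u != v.
  apply/eqP => e; move: dPQ; rewrite disjoint_subset => /subsetP/(_ _ uP).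
  by rewrite inE e vQ.
have dis : forall x, x \in P -> x \in Q -> False.
  by move=> x xP xQ; move: dPQ; rewrite disjoint_subset => /subsetP/(_ _ xP); rewrite inE xQ.
apply: (@gds u v col (Q :\ v) (P :\ u)).
all: try by [].
- exact: h.
- by move: (cardsD1 v Q); rewrite vQ add1n; lia.
- by move: (cardsD1 u P); rewrite uP add1n; lia.
- have dQP : [disjoint Q & P] by rewrite disjoint_sym.
  by apply: disjointW dQP; apply/subsetP => x; rewrite inE => /andP [].
- by apply/negP; rewrite !inE => /andP [_ /(dis _ uP)].
- by rewrite !inE eqxx.
- by rewrite !inE eqxx.
- by apply/negP; rewrite !inE => /andP [_ /dis]; apply.
- by move=> a; rewrite inE => /andP [_ aQ]; apply: h.
- by move=> b; rewrite inE => /andP [_ bP]; rewrite csym; apply: h.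
Qed.


Definition modl (X : {set V}) : bool :=
  [forall y, (y \notin X) ==> [forall x in X, [forall x' in X, c y x == c y x']]].

Lemma modlP (X : {set V}) : reflect (forall y x x', y \notin X -> x \in X -> x' \in X -> c y x = c y x')
  (modl X).
Proof.
apply: (iffP forallP) => [h y x x' yX xX x'X|h y].
  by move: (h y); rewrite yX /= => /forall_inP/(_ _ xX)/forall_inP/(_ _ x'X)/eqP.
apply/implyP => yX; apply/forall_inP => x xX; apply/forall_inP => x' x'X.
by apply/eqP; apply: h.
Qed.

Lemma modT : modl setT.
Proof. by apply/modlP => y x x'; rewrite inE. Qed.

Lemma mod1 x : modl [set x].
Proof. by apply/modlP => y a b _; rewrite !inE => /eqP -> /eqP ->. Qed.

Lemma modU (X Y : {set V}) x : modl X -> modl Y -> x \in X -> x \in Y -> modl (X :|: Y).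
Proof.
move=> /modlP mX /modlP mY xX xY; apply/modlP => y a b.
rewrite !inE negb_or => /andP [yX yY].
have ha : forall a, (a \in X) || (a \in Y) -> c y a = c y x.
  by move=> a0 /orP [h|h]; [apply: mX|apply: mY].
by move=> /ha -> /ha ->.
Qed.

Lemma peel (S : {set V}) : modl S -> n < #|S| -> #|~: S| <= m * k.
Proof.
move=> /modlP mS nS.
have /card_gt0P [s0 s0S] : 0 < #|S| by lia.
pose W (i : 'I_k) := [set w | (w \notin S) && (c w s0 == i)].
have Wm : forall i, #|W i| <= m.
  move=> i; rewrite leqNgt; apply/negP => hm.
  apply: (@joinD (W i) S i) => //.
    rewrite disjoint_subset; apply/subsetP => w; rewrite !inE => /andP [wS _].
    exact: wS.
  move=> p q; rewrite inE => /andP [pS /eqP <-] qS.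
  exact: mS.
have -> : #|~: S| = \sum_(w in ~: S) 1 by rewrite sum1_card.
rewrite (partition_big (fun w => c w s0) predT) //=.
apply: (@leq_trans (\sum_(i < k) m)); last by rewrite sum_nat_const card_ord mulnC.
apply: leq_sum => i _.
rewrite sum1dep_card.
apply: leq_trans (Wm i); apply: subset_leq_card; apply/subsetP => w.
by rewrite !inE.
Qed.

Definition relU (col : 'I_k) (U : {set V}) : rel V :=
  fun x y => [&& x \in U, y \in U, x != y & c x y == col].

Definition conn col (U : {set V}) := forall x y, x \in U -> y \in U -> connect (relU col U) x y.
Definition used col (U : {set V}) := exists x y, [/\ x \in U, y \in U, x != y & c x y = col].

Lemma relU_sym col (U : {set V}) : symmetric (relU col U).
Proof.
move=> x y; rewrite /relU; apply/and4P/and4P => [] [-> -> h /eqP e];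
  by split => //; [rewrite eq_sym|rewrite csym e].
Qed.

Lemma csymU col (U : {set V}) : connect_sym (relU col U).
Proof. exact/sym_connect_sym/relU_sym. Qed.

Lemma closedU col (U : {set V}) : closed (relU col U) U.
Proof. by move=> x y /and4P [-> -> _ _]. Qed.

Lemma connect_in col (U : {set V}) x y : connect (relU col U) x y -> x \in U -> y \in U.
Proof. by move=> h xU; rewrite -(closed_connect (@closedU col U) h). Qed.

Lemma conn_edge col (U : {set V}) x y : x != y -> connect (relU col U) x y ->
  exists z, relU col U x z.
Proof.
move=> xy h; apply: NNPP => hn.
have cl : closed (relU col U) [set x].
  move=> s t est; rewrite !inE.
  case: (eqVneq s x) => [esx|sx]; first by exfalso; apply: hn; exists t; rewrite -esx.
  case: (eqVneq t x) => [etx|tx] //.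
  by exfalso; apply: hn; exists s; rewrite -etx relU_sym.
have := closed_connect cl h; rewrite !inE eqxx => /esym/eqP e.
by move: xy; rewrite e eqxx.
Qed.

Lemma K1 col (U : {set V}) a r d : r \in U -> ~~ connect (relU col U) a r ->
  connect (relU col U) a d -> c r d = c r a.
Proof.
move=> rU nar /connectP [p pth ->].
suff key : forall p x, connect (relU col U) a x -> path (relU col U) x p ->
    c r (last x p) = c r x by apply: key.
elim => [|y q IH] x ax //= /andP [exy pth'].
have ay : connect (relU col U) a y by apply: connect_trans ax (connect1 exy).
rewrite IH //.
move: (exy) => /and4P [xU yU xy /eqP cxy].
have rx : r != x by apply/eqP => e; move: nar; rewrite e ax.
have ry : r != y by apply/eqP => e; move: nar; rewrite e ay.
have crx : c r x != col.
  apply/eqP => e; move: nar; rewrite (connect_trans ax) //.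
  by apply: connect1; rewrite /relU xU rU eq_sym rx csym e eqxx.
have cry : c r y != col.
  apply/eqP => e; move: nar; rewrite (connect_trans ay) //.
  by apply: connect1; rewrite /relU yU rU eq_sym ry csym e eqxx.
case: (norb rx xy ry) => [e|[e|e]] //.
- by move: crx; rewrite e cxy eqxx.
- by move: cry; rewrite -e cxy eqxx.
Qed.

Lemma pair_w (v y1 x2 y2 : V) : v != y1 -> x2 != y2 -> c v y1 != c x2 y2 ->
  exists w, [/\ w != v, w != y1 & (w == x2) || (w == y2)].
Proof.
move=> vy1 x2y2 cne.
case: (eqVneq x2 v) => [ex2|x2v].
  case: (eqVneq y2 y1) => [ey2|y2y1].
    by move: cne; rewrite ex2 ey2 eqxx.
  exists y2; split => //; last by rewrite eqxx orbT.
  by rewrite -ex2 eq_sym.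
case: (eqVneq x2 y1) => [ex2|x2y1]; last by exists x2; rewrite eqxx.
case: (eqVneq y2 v) => [ey2|y2v].
  by move: cne; rewrite ex2 ey2 csym eqxx.
exists y2; split => //; last by rewrite eqxx orbT.
by rewrite -ex2 eq_sym.
Qed.

Lemma usedP col (U : {set V}) x y : relU col U x y -> used col U.
Proof. by move=> /and4P [xU yU xy /eqP e]; exists x, y. Qed.

Lemma G3 s (U : {set V}) : #|U| < s -> (forall col, used col U -> conn col U) ->
  forall a b d, a != b -> b != d -> a != d -> used a U -> used b U -> used d U -> False.
Proof.
elim: s U => // s IH U hU hc a b d ab bd ad ua ub ud.
move: (ua) => [v [y1 [vU y1U vy1 ca]]].
pose U' := U :\ v.
have inU' z : (z \in U') = (z != v) && (z \in U) by rewrite !inE.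
have y1U' : y1 \in U' by rewrite inU' eq_sym vy1 y1U.
have [w [wv wy1 wU]] : exists w, [/\ w != v, w != y1 & w \in U].
  move: (ub) => [x2 [y2 [x2U y2U x2y2 cb]]].
  have cne : c v y1 != c x2 y2 by rewrite ca cb.
  have [w [wv wy1 hw]] := pair_w vy1 x2y2 cne.
  exists w; split => //.
  by case/orP: hw => /eqP ->.
have wU' : w \in U' by rewrite inU' wv wU.
have cU' : forall col, used col U -> conn col U'.
  move=> col ucol x y xU' yU'.
  have cc := hc _ ucol.
  apply/negPn/negP => nxy.
  pose e' := relU col U'.
  have vU'n : v \notin U' by rewrite inU' eqxx.
  have xU : x \in U by move: xU'; rewrite inU' => /andP [].
  have yU : y \in U by move: yU'; rewrite inU' => /andP [].
  have sym' := csymU col U'.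
  have exz : forall w0, exists z, z \in U' /\ ~~ connect e' w0 z.
    move=> w0; case hx: (connect e' w0 x); last by exists x; rewrite hx.
    case hy: (connect e' w0 y); last by exists y; rewrite hy.
    by exfalso; move/negP: nxy; apply; apply: connect_trans hy; rewrite sym'.
  have K2 : forall w0, w0 \in U' -> exists w', connect e' w0 w' /\ c v w' = col.
    move=> w0 w0U; apply: NNPP => hn.
    have cl : closed (relU col U) (connect e' w0).
      move=> s0 t0 est.
      have nv : ~~ connect e' w0 v.
        apply/negP => h; move/negP: vU'n; apply.
        exact: connect_in h w0U.
      move: (est) => /and4P [s0U t0U s0t0 /eqP cst].
      rewrite -!topredE /=.
      case: (eqVneq s0 v) => [es|sv].
        subst s0; rewrite (negbTE nv); apply/esym/negP => h.
        by apply: hn; exists t0.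
      case: (eqVneq t0 v) => [et|tv].
        subst t0; rewrite (negbTE nv); apply/negP => h.
        by apply: hn; exists s0; rewrite csym.
      have e'st : e' s0 t0 by rewrite /e' /relU !inU' sv tv s0U t0U s0t0 cst eqxx.
      apply/idP/idP => h.
        exact: connect_trans h (connect1 e'st).
      by apply: connect_trans h _; rewrite sym'; apply: connect1.
    have [z [zU' nz]] := exz w0.
    have w0U1 : w0 \in U by move: w0U; rewrite inU' => /andP [].
    have zU : z \in U by move: zU'; rewrite inU' => /andP [].
    have := closed_connect cl (cc w0 z w0U1 zU).
    by rewrite -!topredE /= connect0 (negbTE nz).
  have Key1 : forall p z, p \in U' -> z \in U' -> c v p != col -> ~~ connect e' p z ->
      c v p = c z p.
    move=> p z pU zU cvp npz.
    have [z' [zz' cvz']] := K2 z zU.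
    have z'U : z' \in U' by apply: connect_in zz' zU.
    have npz' : ~~ connect e' p z'.
      by apply/negP => h; move/negP: npz; apply; apply: connect_trans h _; rewrite sym'.
    have e1 : c p z' = c p z by apply: K1 pU _ zz'; rewrite sym'.
    have vp : v != p by apply/eqP => e; move: vU'n; rewrite e pU.
    have vz' : v != z' by apply/eqP => e; move: vU'n; rewrite e z'U.
    have pz' : p != z' by apply/eqP => e; move: npz'; rewrite e connect0.
    have cpz' : c p z' != col.
      apply/eqP => e; move/negP: npz'; apply; apply: connect1.
      by rewrite /e' /relU pU z'U pz' e eqxx.
    case: (norb vp pz' vz') => [e|[e|e]].
    - by rewrite e e1 csym.
    - by move: cpz'; rewrite e cvz' eqxx.
    - by move: cvp; rewrite e cvz' eqxx.
  have Key2 : forall p q, p \in U' -> q \in U' -> c v p != col -> c v q != col ->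
      c v p = c v q.
    move=> p q pU qU cp cq.
    case hpq: (connect e' p q).
      have [z [zU nz]] := exz p.
      have nzq : ~~ connect e' q z.
        by apply/negP => h; move/negP: nz; apply; apply: connect_trans hpq h.
      rewrite (Key1 p z) // (Key1 q z) //.
      by rewrite (K1 zU _ hpq) // sym'.
    have nqp : ~~ connect e' q p by rewrite sym' hpq.
    have npq : ~~ connect e' p q by rewrite hpq.
    by rewrite (Key1 p q pU qU cp npq) (Key1 q p qU pU cq nqp) csym.
  have edge : forall col', used col' U -> exists z, z \in U' /\ c v z = col'.
    move=> col' u'.
    have [z /and4P [_ zU vz /eqP cz]] := conn_edge vy1 (hc _ u' v y1 vU y1U).
    by exists z; rewrite inU' eq_sym vz zU.
  have [za [zaU cza]] := edge _ ua.
  have [zb [zbU czb]] := edge _ ub.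
  have [zd [zdU czd]] := edge _ ud.
  case: (eqVneq a col) => [eac|nac].
    have nb : b != col by rewrite -eac eq_sym.
    have nd : d != col by rewrite -eac eq_sym.
    by move: bd; rewrite -czb -czd (Key2 zb zd) ?czb ?czd // eqxx.
  case: (eqVneq b col) => [ebc|nbc].
    have nd : d != col by rewrite -ebc eq_sym.
    by move: ad; rewrite -cza -czd (Key2 za zd) ?cza ?czd // eqxx.
  by move: ab; rewrite -cza -czb (Key2 za zb) ?cza ?czb // eqxx.
have hU' : #|U'| < s.
  by rewrite /U'; move: (cardsD1 v U) hU; rewrite vU add1n; lia.
apply: (IH U' hU' _ a b d ab bd ad).
- move=> col [x [y [xU yU xy cxy]]].
  have xU1 : x \in U by move: xU; rewrite inU' => /andP [].
  have yU1 : y \in U by move: yU; rewrite inU' => /andP [].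
  by apply: cU'; exists x, y.
- have y1w : y1 != w by rewrite eq_sym.
  have [z ez] := conn_edge y1w (cU' _ ua _ _ y1U' wU'); exact: usedP ez.
- have y1w : y1 != w by rewrite eq_sym.
  have [z ez] := conn_edge y1w (cU' _ ub _ _ y1U' wU'); exact: usedP ez.
- have y1w : y1 != w by rewrite eq_sym.
  have [z ez] := conn_edge y1w (cU' _ ud _ _ y1U' wU'); exact: usedP ez.
Qed.


Variable S : {set V}.
Hypothesis Smod : modl S.
Hypothesis Ssmall : forall Y, modl Y -> Y \subset S -> Y != S -> #|Y| <= n.
Hypothesis Sbig : 2 * n + 3 * m + 8 <= #|S|.

Definition Pc x := [arg max_(Y > [set x] | [&& modl Y, x \in Y, Y \subset S & Y != S]) #|Y|].

Lemma P_spec x : x \in S ->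
  [/\ modl (Pc x), x \in Pc x, Pc x \subset S & Pc x != S] /\
  (forall Y, modl Y -> x \in Y -> Y \subset S -> Y != S -> #|Y| <= #|Pc x|).
Proof.
move=> xS; rewrite /Pc.
case: arg_maxnP.
  rewrite mod1 inE eqxx sub1set xS /=; apply/eqP => e.
  by move: Sbig; rewrite -e cards1; lia.
move=> Y /and4P [mY xY sY nY] hY; split => // Z mZ xZ sZ nZ.
by apply: hY; rewrite mZ xZ sZ nZ.
Qed.

Lemma Pmod x : x \in S -> modl (Pc x).
Proof. by case/P_spec => [[]]. Qed.
Lemma Pin x : x \in S -> x \in Pc x.
Proof. by case/P_spec => [[]]. Qed.
Lemma Psub x : x \in S -> Pc x \subset S.
Proof. by case/P_spec => [[]]. Qed.
Lemma Pne x : x \in S -> Pc x != S.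
Proof. by case/P_spec => [[]]. Qed.
Lemma Psize x : x \in S -> #|Pc x| <= n.
Proof. by move=> xS; apply: Ssmall; [apply: Pmod|apply: Psub|apply: Pne]. Qed.

Lemma union_ne (X Y : {set V}) : X \subset S -> Y \subset S -> #|X| <= n -> #|Y| <= n ->
  X :|: Y != S.
Proof.
move=> _ _ hX hY; apply/eqP => e.
have := leq_card_setU X Y; rewrite e => /leqifP; case: ifP => _ h; lia.
Qed.

Lemma Pmax x Y : x \in S -> modl Y -> x \in Y -> Y \subset S -> Y != S -> Y \subset Pc x.
Proof.
move=> xS mY xY sY nY.
have hY : #|Y| <= n by apply: Ssmall.
have mZ : modl (Pc x :|: Y) by apply: modU (Pmod xS) mY (Pin xS) xY.
have sZ : Pc x :|: Y \subset S by rewrite subUset Psub.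
have nZ : Pc x :|: Y != S by apply: union_ne => //; [apply: Psub|apply: Psize].
have cZ : #|Pc x :|: Y| <= #|Pc x|.
  by case: (P_spec xS) => _; apply => //; rewrite inE Pin.
have eZ : Pc x :|: Y = Pc x.
  apply/eqP; rewrite eq_sym eqEcard subsetUl cZ //.
by rewrite -eZ subsetUr.
Qed.

Lemma Peq x y : x \in S -> y \in Pc x -> Pc y = Pc x.
Proof.
move=> xS yP.
have yS : y \in S by apply: (subsetP (Psub xS)).
have mZ : modl (Pc x :|: Pc y) by apply: modU (Pmod xS) (Pmod yS) yP (Pin yS).
have sZ : Pc x :|: Pc y \subset S by rewrite subUset !Psub.
have nZ : Pc x :|: Pc y != S by apply: union_ne; rewrite ?Psub ?Psize.
have h1 : Pc x :|: Pc y \subset Pc x by apply: Pmax => //; rewrite inE Pin.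
have h2 : Pc x :|: Pc y \subset Pc y by apply: Pmax => //; rewrite inE yP.
apply/eqP; rewrite eqEsubset.
by rewrite (subset_trans _ h1) ?subsetUr // (subset_trans _ h2) ?subsetUl.
Qed.

Lemma Pnot x y : x \in S -> y \in S -> y \notin Pc x -> x \notin Pc y.
Proof.
move=> xS yS nyx; apply/negP => xy.
by move: nyx; rewrite (Peq yS xy) Pin.
Qed.

Lemma Pcol x y z : x \in S -> y \notin Pc x -> z \in Pc x -> c y z = c y x.
Proof. by move=> xS nyx zx; move/modlP: (Pmod xS); apply => //; apply: Pin. Qed.

Definition rep x := odflt x [pick z in Pc x].

Lemma rep_in x : x \in S -> rep x \in Pc x.
Proof. by move=> xS; rewrite /rep; case: pickP => [z //|/(_ x)]; rewrite Pin. Qed.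

Lemma rep_S x : x \in S -> rep x \in S.
Proof. by move=> xS; apply: (subsetP (Psub xS)); apply: rep_in. Qed.

Lemma P_rep x : x \in S -> Pc (rep x) = Pc x.
Proof. by move=> xS; apply: Peq => //; apply: rep_in. Qed.

Lemma rep_rep x : x \in S -> rep (rep x) = rep x.
Proof. by move=> xS; rewrite {1}/rep P_rep // /rep; case: pickP. Qed.

Lemma rep_eq x y : x \in S -> Pc x = Pc y -> rep x = rep y.
Proof.
move=> xS e; rewrite /rep e; case: pickP => // h.
by move: (h x); rewrite -e Pin.
Qed.

Lemma inP_rep x y : x \in S -> y \in S -> (y \in Pc x) = (rep x == rep y).
Proof.
move=> xS yS; apply/idP/eqP => [h|e].
  by apply: rep_eq => //; rewrite (Peq xS h).
by rewrite -(P_rep xS) e P_rep // Pin.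
Qed.

Definition R := rep @: S.

Lemma R_S r : r \in R -> r \in S /\ rep r = r.
Proof. by case/imsetP => x xS ->; split; [apply: rep_S|apply: rep_rep]. Qed.

Lemma F1 col : used col R -> conn col R.
Proof.
move=> [a [b [aR bR ab cab]]] x y xR yR.
apply/negPn/negP => nxy.
pose e := relU col R.
have [r [rR nar]] : exists r, r \in R /\ ~~ connect e a r.
  case hx: (connect e a x); last by exists x; rewrite hx.
  case hy: (connect e a y); last by exists y; rewrite hy.
  by exfalso; move/negP: nxy; apply; apply: connect_trans hy; rewrite csymU.
have [aS ra] := R_S aR.
have [bS rb] := R_S bR.
have [rS rr] := R_S rR.
pose M := [set z in S | connect e a (rep z)].
have mM : modl M.
  apply/modlP => y0 z1 z2; rewrite !inE => ny0 /andP [z1S h1] /andP [z2S h2].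
  case y0S : (y0 \in S); last first.
    by move/modlP: Smod; apply => //; rewrite y0S.
  move: ny0; rewrite y0S /= => ny0.
  have r0R : rep y0 \in R by apply: imset_f.
  suff hz : forall z, z \in S -> connect e a (rep z) -> c y0 z = c (rep y0) a.
    by rewrite !hz.
  move=> z zS hz.
  have nz : z \notin Pc y0.
    rewrite inP_rep //; apply/negP => /eqP e0; move/negP: ny0; apply; by rewrite e0.
  have e1 := Pcol y0S nz (rep_in y0S).
  have nr0 : rep y0 \notin Pc z.
    rewrite inP_rep ?rep_S // rep_rep // eq_sym.
    by rewrite inP_rep // in nz.
  have e2 := Pcol zS nr0 (rep_in zS).
  rewrite csym -e1 csym -e2.
  by apply: K1 r0R ny0 hz.
have sM : M \subset S by apply/subsetP => z; rewrite inE => /andP [].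
have nM : M != S.
  apply/eqP => e0; move: rS; rewrite -e0 inE rr => /andP [_ h].
  by move/negP: nar.
have aM : a \in M by rewrite inE aS ra connect0.
have bM : b \in M.
  rewrite inE bS rb; apply: connect1.
  by rewrite /e /relU aR bR ab cab eqxx.
have := subsetP (Pmax aS mM aM sM nM) b bM.
by rewrite inP_rep // ra rb (negbTE ab).
Qed.

Lemma cross_used x y : x \in S -> y \in S -> y \notin Pc x -> used (c x y) R.
Proof.
move=> xS yS nyx.
have xR : rep x \in R by apply: imset_f.
have yR : rep y \in R by apply: imset_f.
have nxy : rep x != rep y by rewrite -inP_rep.
have nxy' : x \notin Pc y by apply: Pnot.
have e1 := Pcol yS nxy' (rep_in yS).
have nr : rep y \notin Pc x by rewrite inP_rep ?rep_S // rep_rep.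
have e2 := Pcol xS nr (rep_in xS).
exists (rep x), (rep y); split => //.
by rewrite csym e2 csym e1.
Qed.

Lemma no3 x1 y1 x2 y2 x3 y3 :
  x1 \in S -> y1 \in S -> y1 \notin Pc x1 ->
  x2 \in S -> y2 \in S -> y2 \notin Pc x2 ->
  x3 \in S -> y3 \in S -> y3 \notin Pc x3 ->
  c x1 y1 != c x2 y2 -> c x2 y2 != c x3 y3 -> c x1 y1 != c x3 y3 -> False.
Proof.
move=> ? ? ? ? ? ? ? ? ? h1 h2 h3.
apply: (@G3 #|R|.+1 R (ltnSn _) F1 _ _ _ h1 h2 h3); exact: cross_used.
Qed.

Hypothesis k2 : 1 < k.

Lemma two_colors : exists r b : 'I_k, r != b /\
  forall x y, x \in S -> y \in S -> y \notin Pc x -> c x y = r \/ c x y = b.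
Proof.
have /card_gt0P [x0 x0S] : 0 < #|S| by lia.
have : 0 < #|S :\: Pc x0|.
  rewrite cardsDS ?Psub //; have := Psize x0S; lia.
move=> /card_gt0P [y0]; rewrite inE => /andP [ny0 y0S].
case: (classic (exists x y, [/\ x \in S, y \in S, y \notin Pc x & c x y != c x0 y0])).
  move=> [x1 [y1 [x1S y1S ny1 ne]]].
  exists (c x0 y0), (c x1 y1); split; first by rewrite eq_sym.
  move=> x y xS yS nyx.
  case: (eqVneq (c x y) (c x0 y0)) => [->|h1]; first by left.
  case: (eqVneq (c x y) (c x1 y1)) => [->|h2]; first by right.
  by exfalso; apply: (no3 x0S y0S ny0 x1S y1S ny1 xS yS nyx); rewrite 1?eq_sym.
move=> hn.
have k0 : 0 < k by lia.
exists (c x0 y0), (if c x0 y0 == Ordinal k0 then Ordinal k2 else Ordinal k0); split.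
  by case: ifP => [/eqP ->|/negbT]; rewrite // -val_eqE.
move=> x y xS yS nyx; left; apply/eqP; apply: contraNT (nyx) => h.
by exfalso; apply: hn; exists x, y.
Qed.

Definition Dset col x := [set y in S | (y \notin Pc x) && (c x y == col)].

Lemma DsetP col x z : (z \in Dset col x) = [&& z \in S, z \notin Pc x & c x z == col].
Proof. by rewrite inE. Qed.

Lemma L2 col x y : x \in S -> y \in S -> y \notin Pc x -> c x y = col ->
  n + m + 1 <= #|Dset col x| -> m + 1 <= #|Dset col y| -> False.
Proof.
move=> xS yS nyx cxy hx hy.
have hy' : m <= #|Dset col y :\ x|.
  by have := cardsD1 x (Dset col y); have := leq_b1 (x \in Dset col y); lia.
have [B [sB cB]] := subset_of_card hy'.
pose A := (Dset col x :\ y) :\: B.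
have hA : n <= #|A|.
  rewrite /A cardsD.
  have : #|(Dset col x :\ y) :&: B| <= #|B| by apply: subset_leq_card; apply: subsetIr.
  by have := cardsD1 y (Dset col x); have := leq_b1 (y \in Dset col x); lia.
have xnP : x \in Pc x by apply: Pin.
have xy : x != y by apply/eqP => e; move: nyx; rewrite -e xnP.
have ynP : y \in Pc y by apply: Pin.
have inB z : z \in B -> (z != x) && (z \in Dset col y) by move=> zB; rewrite -in_setD1; apply: (subsetP sB).
apply: (@gds x y col A B xy cxy hA) => //.
- by rewrite cB.
- rewrite disjoint_subset; apply/subsetP => z; rewrite /A !inE => /andP [zB _].
  by rewrite /= zB.
- by rewrite /A in_setD in_setD1 DsetP xnP /= !andbF.
- by apply/negP => /inB; rewrite eqxx.
- by rewrite /A in_setD in_setD1 eqxx /= andbF.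
- by apply/negP => /inB /andP [_]; rewrite DsetP ynP /= andbF.
- by move=> z; rewrite /A in_setD in_setD1 DsetP => /andP [_ /andP [_ /and3P [_ _ /eqP]]].
- by move=> z /inB /andP [_]; rewrite DsetP => /and3P [_ _ /eqP].
Qed.

Lemma caseA col x : x \in S -> n + 1 <= #|Dset col x| -> m + 1 <= #|Pc x| -> False.
Proof.
move=> xS hD hP.
apply: (@joinD (Pc x) (Dset col x) col) => //; try lia.
  rewrite disjoint_subset; apply/subsetP => z zP.
  by rewrite inE DsetP zP /= andbF.
move=> p q pP; rewrite DsetP => /and3P [_ nq /eqP cq].
by rewrite csym (Pcol xS nq pP) csym.
Qed.

Section TwoCol.
Variables (r b : 'I_k).
Hypothesis rb : r != b.
Hypothesis cross : forall x y, x \in S -> y \in S -> y \notin Pc x -> c x y = r \/ c x y = b.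

Lemma Dsum x : x \in S -> #|Dset r x| + #|Dset b x| = #|S| - #|Pc x|.
Proof.
move=> xS.
have e1 : S :\: Pc x = Dset r x :|: Dset b x.
  apply/setP => z; rewrite !inE.
  case zS: (z \in S); rewrite ?andbF //=.
  case zP: (z \in Pc x) => //=.
  have [->|->] := cross xS zS (negbT zP); by rewrite eqxx ?orbT.
have e2 : Dset r x :&: Dset b x = set0.
  apply/setP => z; rewrite !inE.
  case: (eqVneq (c x z) r) => [->|h]; first by rewrite (negbTE rb) !andbF.
  by rewrite !andbF /=; rewrite ?andbF.
have := cardsUI (Dset r x) (Dset b x).
by rewrite -e1 e2 cards0 addn0 cardsDS ?Psub // => <-.
Qed.

End TwoCol.

Lemma caseB r b x : r != b ->
  (forall x y, x \in S -> y \in S -> y \notin Pc x -> c x y = r \/ c x y = b) ->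
  x \in S -> n + m + 1 <= #|Dset r x| -> False.
Proof.
move=> rb cross xS hx.
have hsm : forall y, y \in Dset r x -> #|Dset r y| <= m.
  move=> y; rewrite DsetP => /and3P [yS ny /eqP cy].
  rewrite leqNgt; apply/negP => h.
  by apply: (L2 xS yS ny cy hx); lia.
have /card_gt0P [y1 y1D] : 0 < #|Dset r x| by lia.
move: (y1D); rewrite DsetP => /and3P [y1S _ _].
pose T := Dset r x :\: (Pc y1 :|: Dset r y1).
have : 0 < #|T|.
  rewrite /T cardsD.
  have h1 : #|Dset r x :&: (Pc y1 :|: Dset r y1)| <= #|Pc y1 :|: Dset r y1|.
    by apply: subset_leq_card; apply: subsetIr.
  have h2 : #|Pc y1 :|: Dset r y1| <= #|Pc y1| + #|Dset r y1| by apply: leq_card_setU.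
  have h3 := Psize y1S.
  have h4 := hsm _ y1D.
  lia.
move=> /card_gt0P [y2]; rewrite /T in_setD in_setU => /andP [/norP [ny2 nD] y2D].
have y2S : y2 \in S by move: y2D; rewrite DsetP => /and3P [].
have cyb : c y1 y2 = b.
  case: (cross _ _ y1S y2S ny2) => // e.
  by move: nD; rewrite DsetP y2S ny2 e eqxx.
have rbs : b != r by rewrite eq_sym.
have crossb : forall x y, x \in S -> y \in S -> y \notin Pc x -> c x y = b \/ c x y = r.
  by move=> ? ? ? ? ?; rewrite or_comm; apply: cross.
apply: (L2 y1S y2S ny2 cyb).
- have := Dsum rb cross y1S; have := Psize y1S; have := hsm _ y1D; lia.
- have := Dsum rb cross y2S; have := Psize y2S; have := hsm _ y2D; lia.
Qed.

Lemma tri a b1 b2 : a \in S -> b1 \in S -> b2 \in S -> b1 \notin Pc a -> b2 \notin Pc a ->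
  b2 \notin Pc b1 -> c a b1 = c a b2 -> #|Pc b1| + #|Pc b2| <= #|Dset (c a b1) a|.
Proof.
move=> aS b1S b2S n1 n2 n12 e.
have na1 : a \notin Pc b1 by apply: Pnot.
have na2 : a \notin Pc b2 by apply: Pnot.
have sub : Pc b1 :|: Pc b2 \subset Dset (c a b1) a.
  apply/subsetP => z; rewrite in_setU => /orP [zP|zP]; rewrite DsetP.
    have zS : z \in S by apply: (subsetP (Psub b1S)).
    rewrite zS (Pcol b1S na1 zP) eqxx andbT /=.
    apply/negP => zA; move/negP: n1; apply.
    by rewrite -(Peq aS zA) (Peq b1S zP) Pin.
  have zS : z \in S by apply: (subsetP (Psub b2S)).
  rewrite zS (Pcol b2S na2 zP) e eqxx andbT /=.
  apply/negP => zA; move/negP: n2; apply.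
  by rewrite -(Peq aS zA) (Peq b2S zP) Pin.
have dis : Pc b1 :&: Pc b2 = set0.
  apply/setP => z; rewrite !inE; apply/negP => /andP [z1 z2].
  by move/negP: n12; apply; rewrite -(Peq b1S z1) (Peq b2S z2) Pin.
have := cardsUI (Pc b1) (Pc b2); rewrite dis cards0 addn0 => <-.
exact: subset_leq_card.
Qed.

Hypothesis nlim : n <= 6 * m + 6.

Lemma final : False.
Proof.
have [r [b [rb cross]]] := two_colors.
have br : b != r by rewrite eq_sym.
have crossb : forall x y, x \in S -> y \in S -> y \notin Pc x -> c x y = b \/ c x y = r.
  by move=> x y ? ? ?; rewrite or_comm; apply: cross.
have hB : forall x, x \in S -> #|Dset r x| <= n + m /\ #|Dset b x| <= n + m.
  move=> x xS; split; rewrite leqNgt; apply/negP => h.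
    by apply: (caseB rb cross xS); lia.
  by apply: (caseB br crossb xS); lia.
have hP1 : forall x, x \in S -> m + 1 <= #|Pc x|.
  move=> x xS; have := Dsum rb cross xS; have := hB x xS; lia.
have hD : forall x, x \in S -> #|Dset r x| <= n /\ #|Dset b x| <= n.
  move=> x xS; split; rewrite leqNgt; apply/negP => h.
    by apply: (@caseA r x xS _ (hP1 x xS)); lia.
  by apply: (@caseA b x xS _ (hP1 x xS)); lia.
have hP2 : forall x, x \in S -> 3 * m + 8 <= #|Pc x|.
  move=> x xS; have := Dsum rb cross xS; have := hD x xS; lia.
have hT : forall a b1 b2, a \in S -> b1 \in S -> b2 \in S -> b1 \notin Pc a ->
    b2 \notin Pc a -> b2 \notin Pc b1 -> c a b1 = c a b2 -> False.
  move=> a b1 b2 aS b1S b2S n1 n2 n12 e.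
  have := tri aS b1S b2S n1 n2 n12 e.
  have := hP2 _ b1S; have := hP2 _ b2S; have := hD _ aS.
  by case: (cross _ _ aS b1S n1) => ->; lia.
have /card_gt0P [x1 x1S] : 0 < #|S| by lia.
have : 0 < #|S :\: Pc x1|.
  rewrite cardsDS ?Psub //; have := Psize x1S; lia.
move=> /card_gt0P [y]; rewrite in_setD => /andP [ny yS].
have : 0 < #|S :\: (Pc x1 :|: Pc y)|.
  rewrite cardsDS ?subUset ?Psub //.
  have := leq_card_setU (Pc x1) (Pc y) => /leqifP; case: ifP => _ h;
  have := Psize x1S; have := Psize yS; lia.
move=> /card_gt0P [z]; rewrite in_setD in_setU => /andP [/norP [nz1 nzy] zS].
have nx1y : x1 \notin Pc y by apply: Pnot.
have nx1z : x1 \notin Pc z by apply: Pnot.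
have nyz : y \notin Pc z by apply: Pnot.
case: (eqVneq (c x1 y) (c x1 z)) => [e|h1].
  exact: hT x1S yS zS ny nz1 nzy e.
case: (eqVneq (c x1 y) (c y z)) => [e|h2].
  by apply: (hT y x1 z yS x1S zS nx1y nzy nz1); rewrite csym.
apply: (hT z x1 y zS x1S yS nx1z nyz ny).
rewrite csym (csym z y).
move: (cross _ _ x1S yS ny) (cross _ _ x1S zS nz1) (cross _ _ yS zS nzy) h1 h2.
by case=> ->; case=> ->; case=> ->; rewrite ?eqxx // (negbTE rb) // (negbTE br).
Qed.
End Main.

Theorem proposition4 (n m k : nat) :
  1 <= m -> m <= n -> 3 <= k -> n <= 6 * m + 6 ->
  gr_K3_double_star_le n m k
    (if odd n then 2 * n + m * (k + 3) + 9 else 2 * n + m * (k + 3) + 8).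
Proof.
move=> m1 mn k3 nl.
exists (2 * n + m * (k + 3) + 8); split; first by case: (odd n); lia.
move=> c csym.
apply: NNPP => H.
have nrb : ~ has_rainbow_K3 c by move=> h; apply: H; left.
have nds : ~ has_mono_double_star n m c by move=> h; apply: H; right.
pose N := 2 * n + m * (k + 3) + 8.
have PT : modl c [set: 'I_N] && (n < #|[set: 'I_N]|).
  by rewrite modT cardsT card_ord /N; apply/ltP; lia.
case: (@arg_minnP _ [set: 'I_N] (fun Y : {set 'I_N} => modl c Y && (n < #|Y|)) (fun Y : {set 'I_N} => #|Y|) PT) => S /andP [Smod nS] Smin.
have Ssmall : forall Y, modl c Y -> Y \subset S -> Y != S -> #|Y| <= n.
  move=> Y mY sY nY; rewrite leqNgt; apply/negP => h.
  have := Smin Y; rewrite mY h => /(_ isT).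
  have : Y \proper S by rewrite properEneq nY sY.
  by move=> /proper_card hp hs; have := leq_trans hp hs; rewrite ltnn.
have Sbig : 2 * n + 3 * m + 8 <= #|S|.
  have := peel csym nds Smod nS.
  have := cardsC S; rewrite card_ord /N; lia.
have k2 : 1 < k by lia.
exact: (final csym nrb nds Smod Ssmall Sbig k2 nl).
Qed.
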